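(* Let $H$ be a connected graph that is not a tree. If $H\in\mathcal{G}$, then the girth of $H$ is at most $6$.
   Context: All graphs are finite and simple. $d_{H,2}(x,y)=\min\{d_H(x,y),2\}$ with $d_H$ the shortest-path distance. A local adjacency basis of $H$ is a minimum-size set $S\subseteq V(H)$ such that for any two adjacent vertices $x,y$ some $s\in S$ satisfies $d_{H,2}(s,x)\ne d_{H,2}(s,y)$. $\mathcal{G}$: class of graphs $H$ such that every local adjacency basis $B$ of $H$ satisfies $B\subseteq N_H(v)$ for some $v\in V(H)$ (open neighbourhood). The girth is the length of a shortest cycle. *)

(* Defs.v *)
From mathcomp Require Import all_boot.
Set Implicit Arguments. Unset Strict Implicit. Unset Printing Implicit Defensive.

Definition simple_graph (T : finType) (e : rel T) : Prop :=
  symmetric e /\ irreflexive e.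

Section Graph.
Variables (T : finType) (e : rel T).

Definition walk_len (x y : T) (n : nat) : bool :=
  [exists t : n.-tuple T, path e x t && (last x t == y)].

(* shortest-path distance d_H(x,y); walks of length < #|T| suffice when
   y is reachable; if y is unreachable the value is #|T| (stands for infinity) *)
Definition dist (x y : T) : nat := find (walk_len x y) (iota 0 #|T|).

Definition dist2 (x y : T) : nat := minn (dist x y) 2.

Definition local_adj_resolving (S : {set T}) : Prop :=
  forall x y, e x y -> exists2 s, s \in S & dist2 s x != dist2 s y.

Definition local_adj_basis (B : {set T}) : Prop :=
  local_adj_resolving B /\ forall S, local_adj_resolving S -> #|B| <= #|S|.

Definition open_nbhd (v : T) : {set T} := [set u | e v u].

Definition in_class_G : Prop :=
  forall B, local_adj_basis B -> exists v, B \subset open_nbhd v.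

Definition connected_graph : Prop := forall x y, connect e x y.

Definition has_cycle_len (k : nat) : bool :=
  [exists t : k.-tuple T, (2 < k) && cycle e t && uniq t].

Definition acyclic : Prop := forall k, ~~ has_cycle_len k.

Definition is_tree : Prop := connected_graph /\ acyclic.

Definition girth_is (g : nat) : Prop :=
  has_cycle_len g /\ forall k, has_cycle_len k -> g <= k.

End Graph.

(* Main.v *)
Require Import Defs.
From mathcomp Require Import all_boot.
Set Implicit Arguments. Unset Strict Implicit. Unset Printing Implicit Defensive.



Lemma dist_small (T : finType) (e : rel T) s x :
  1 < #|T| -> dist e s x < 2 -> (s == x) || e s x.
Proof.
move=> hT hd.
have hf : find (walk_len e s x) (iota 0 #|T|) < size (iota 0 #|T|).
  by rewrite size_iota; apply: leq_trans hT.
rewrite -has_find in hf.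
have := nth_find 0 hf; rewrite -/(dist e s x) nth_iota; last first.
  by apply: leq_trans hT.
rewrite add0n.
case: (dist e s x) hd => [|[|//]] _ /existsP[t /andP[hp /eqP hl]].
  by move: t hp hl => [[|//] ?] /= _ ->; rewrite eqxx.
move: t hp hl => [[//|z [|//]] ?] /= /andP[h _] <-; by rewrite h orbT.
Qed.

Lemma dist_refl (T : finType) (e : rel T) x : dist e x x = 0.
Proof.
have: 0 < #|T| by apply/card_gt0P; exists x.
rewrite /dist; case: #|T| => [//|n] _ /=.
suff -> : walk_len e x x 0 by [].
by apply/existsP; exists [tuple]; rewrite /= eqxx.
Qed.

Lemma dist2_neq (T : finType) (e : rel T) s x y :
  1 < #|T| -> dist2 e s x != dist2 e s y ->
  [|| (s == x), e s x, (s == y) | e s y].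
Proof.
move=> hT; rewrite /dist2.
case: (ltnP (dist e s x) 2) => hx.
  by move: (dist_small hT hx) => /orP[h|h]; rewrite h ?orbT.
case: (ltnP (dist e s y) 2) => hy.
  by move: (dist_small hT hy) => /orP[h|h]; rewrite h ?orbT.
by rewrite eqxx.
Qed.

Lemma cyc_nbrs (T : finType) (e : rel T) (t : seq T) x :
  cycle e t -> uniq t -> 2 < size t -> x \in t ->
  exists p q, [/\ p \in t, q \in t, p != q, e p x & e x q].
Proof.
move=> hc hu hs xt; case/rot_to: xt => i s hr.
have hc' : cycle e (x :: s) by rewrite -hr rot_cycle.
have hu' : uniq (x :: s) by rewrite -hr rot_uniq.
have hs' : 2 < size (x :: s) by rewrite -hr size_rot.
have hm : forall z, z \in x :: s -> z \in t by move=> z; rewrite -hr mem_rot.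
clear hr; case: s hc' hu' hs' hm => [//|a s]; case/lastP: s => [//|s b].
rewrite /= rcons_path last_rcons => /andP[xa /andP[_ bx]].
move=> /andP[_ /andP[ab _]] _ hm.
exists b, a; split => //.
- by apply: hm; rewrite !inE mem_rcons inE eqxx !orbT.
- by apply: hm; rewrite !inE eqxx orbT.
- by apply: contraNneq ab => ->; rewrite mem_rcons inE eqxx.
Qed.

Lemma neqsF (T : eqType) (x y : T) : x != y -> (y == x) = false.
Proof. by rewrite eq_sym => /negbTE. Qed.

Ltac kill_neqs :=
  repeat match goal with H : is_true (?x != ?y) |- _ =>
    rewrite ?(negbTE H) ?(neqsF H); clear H end.

Lemma mk_cyc (T : finType) (e : rel T) (s : seq T) :
  2 < size s -> cycle e s -> uniq s -> has_cycle_len e (size s).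
Proof. by move=> h1 h2 h3; apply/existsP; exists (in_tuple s); rewrite h1 h2 h3. Qed.

Lemma eneq (T : finType) (e : rel T) x y : simple_graph e -> e x y -> x != y.
Proof. by case=> _ irr exy; apply: contraTneq exy => ->; rewrite irr. Qed.

Lemma cyc3 (T : finType) (e : rel T) a b c : simple_graph e ->
  e a b -> e b c -> e c a -> has_cycle_len e 3.
Proof.
move=> g ab bc ca.
have := eneq g ab; have := eneq g bc; have := eneq g ca => h1 h2 h3.
have := @mk_cyc T e [:: a; b; c]; apply => //=; first by rewrite ab bc ca.
by rewrite !inE; kill_neqs.
Qed.

Lemma cyc4 (T : finType) (e : rel T) a b c d : simple_graph e ->
  e a b -> e b c -> e c d -> e d a -> a != c -> b != d -> has_cycle_len e 4.
Proof.
move=> g ab bc cd da h5 h6.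
have := eneq g ab; have := eneq g bc; have := eneq g cd; have := eneq g da => h1 h2 h3 h4.
have := @mk_cyc T e [:: a; b; c; d]; apply => //=; first by rewrite ab bc cd da.
by rewrite !inE; kill_neqs.
Qed.

Lemma cyc5 (T : finType) (e : rel T) a b c d f : simple_graph e ->
  e a b -> e b c -> e c d -> e d f -> e f a ->
  a != c -> a != d -> b != d -> b != f -> c != f -> has_cycle_len e 5.
Proof.
move=> g ab bc cd df fa.
have := eneq g ab; have := eneq g bc; have := eneq g cd; have := eneq g df; have := eneq g fa => *.
have := @mk_cyc T e [:: a; b; c; d; f]; apply => //=; first by rewrite ab bc cd df fa.
by rewrite !inE; kill_neqs.
Qed.

Lemma cyc6 (T : finType) (e : rel T) a b c d f h : simple_graph e ->
  e a b -> e b c -> e c d -> e d f -> e f h -> e h a ->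
  a != c -> a != d -> a != f -> b != d -> b != f -> b != h ->
  c != f -> c != h -> d != h -> has_cycle_len e 6.
Proof.
move=> g ab bc cd df fh ha.
have := eneq g ab; have := eneq g bc; have := eneq g cd; have := eneq g df;
have := eneq g fh; have := eneq g ha => *.
have := @mk_cyc T e [:: a; b; c; d; f; h]; apply => //=; first by rewrite ab bc cd df fh ha.
by rewrite !inE; kill_neqs.
Qed.

Definition near (T : finType) (e : rel T) v x :=
  [|| x == v, e v x | [exists s, e v s && e s x]].

Lemma core (T : finType) (e : rel T) v (t : seq T) : simple_graph e ->
  (forall k, 2 < k -> k < 7 -> ~~ has_cycle_len e k) ->
  (forall x y, e x y -> near e v x || near e v y) ->
  cycle e t -> uniq t -> 2 < size t -> False.
Proof.
move=> g nc hn hc hu hs.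
have [sym irr] := g.
have n3 a b c : e a b -> e b c -> e c a -> False.
  by move=> *; apply: (negP (nc 3 isT isT)); apply: (@cyc3 _ _ a b c).
have n4 a b c d : e a b -> e b c -> e c d -> e d a -> a != c -> b != d -> False.
  by move=> *; apply: (negP (nc 4 isT isT)); apply: (@cyc4 _ _ a b c d).
have n5 a b c d f : e a b -> e b c -> e c d -> e d f -> e f a ->
    a != c -> a != d -> b != d -> b != f -> c != f -> False.
  by move=> *; apply: (negP (nc 5 isT isT)); apply: (@cyc5 _ _ a b c d f).
have n6 a b c d f h : e a b -> e b c -> e c d -> e d f -> e f h -> e h a ->
  a != c -> a != d -> a != f -> b != d -> b != f -> b != h ->
  c != f -> c != h -> d != h -> False.
  by move=> *; apply: (negP (nc 6 isT isT)); apply: (@cyc6 _ _ a b c d f h).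
case: (boolP [exists x, (x \in t) && ~~ near e v x]) => [/existsP[x /andP[xt xf]] | hA].
  have [p [q [pt qt pq px xq]]] := cyc_nbrs hc hu hs xt.
  have np : near e v p by move: (hn p x px); rewrite (negbTE xf) orbF.
  have nq : near e v q by move: (hn x q xq); rewrite (negbTE xf).
  move: xf; rewrite /near !negb_or => /and3P[xv vx nex].
  have qx : e q x by rewrite sym.
  have pv : p != v by apply: contraNneq vx => <-.
  have qv : q != v by apply: contraNneq vx => <-.
  have vp : ~~ e v p by apply: contra nex => vp; apply/existsP; exists p; rewrite vp px.
  have vq : ~~ e v q by apply: contra nex => vq; apply/existsP; exists q; rewrite vq qx.
  move: np; rewrite /near (negbTE pv) (negbTE vp) /= => /existsP[a /andP[va ap]].
  move: nq; rewrite /near (negbTE qv) (negbTE vq) /= => /existsP[b /andP[vb bq]].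
  have ax : a != x by apply: contraNneq vx => <-.
  have bx : b != x by apply: contraNneq vx => <-.
  have aq : a != q by apply: contraNneq vq => <-.
  have bp : b != p by apply: contraNneq vp => <-.
  have vx' : v != x by rewrite eq_sym.
  have vp' : v != p by rewrite eq_sym.
  have vq' : v != q by rewrite eq_sym.
  have xb : x != b by rewrite eq_sym.
  have pb : p != b by rewrite eq_sym.
  case: (eqVneq a b) => [eab|nab].
    subst b; apply: (n4 a p x q) => //; by rewrite sym.
  apply: (n6 v a p x q b) => //; by rewrite sym.
have allnear x : x \in t -> near e v x.
  by move=> xt; apply: contraNT hA => nx; apply/existsP; exists x; rewrite xt.
case: (boolP [exists x, (x \in t) &&
   [&& [exists a, e v a && e a x], ~~ e v x & x != v]]) => [|hB].
  case/existsP=> x /andP[xt /and3P[/existsP[a /andP[va ax]] vx xv]].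
  have key y : y \in t -> e x y -> e v y.
    move=> yt xy; move: (allnear y yt); rewrite /near.
    case/or3P=> [/eqP yv|//|/existsP[b /andP[vb by_]]].
      by move: vx; rewrite -yv sym xy.
    case: (boolP (e v y)) => // vy.
    case: (eqVneq a b) => [eab|nab].
      by subst b; case: (n3 a x y) => //; rewrite sym.
    have vy' : v != y by apply: contraNneq vx => ->; rewrite sym.
    have vx' : v != x by rewrite eq_sym.
    have ay : a != y by apply: contraNneq vy => <-.
    have xb : x != b by apply: contraNneq vx => ->.
    by case: (n5 v a x y b) => //; rewrite sym.
  have [p [q [pt qt pq px xq]]] := cyc_nbrs hc hu hs xt.
  have vp : e v p by apply: key => //; rewrite sym.
  have vq : e v q by apply: key.
  case: (n4 v p x q) => //; by [rewrite sym | rewrite eq_sym].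
have noL2 x : x \in t -> (x == v) || e v x.
  move=> xt; move: (allnear x xt); rewrite /near.
  case/or3P=> [->|->|hx]; rewrite ?orbT //.
  apply: contraNT hB; rewrite negb_or => /andP[xv vx].
  by apply/existsP; exists x; rewrite xt hx vx xv.
have [x [xt xv]] : exists x, x \in t /\ x != v.
  case: t hc hu hs noL2 allnear hA hB => [//|x0 s] hc hu hs noL2 allnear hA hB.
  have x0t : x0 \in x0 :: s by rewrite inE eqxx.
  have [p [q [pt qt pq px xq]]] := cyc_nbrs hc hu hs x0t.
  case: (eqVneq x0 v) => [ev|ne]; last by exists x0.
  exists p; split => //; rewrite -ev; exact: (eneq g px).
have vx : e v x by move: (noL2 x xt); rewrite (negbTE xv).
have [p [q [pt qt pq px xq]]] := cyc_nbrs hc hu hs xt.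
have pv : p = v.
  case/orP: (noL2 p pt) => [/eqP //|vp].
  by case: (n3 v x p) => //; rewrite sym.
have qv : q = v.
  case/orP: (noL2 q qt) => [/eqP //|vq].
  by case: (n3 v x q) => //; rewrite sym.
by move: pq; rewrite pv qv eqxx.
Qed.

Lemma dist0 (T : finType) (e : rel T) s x : dist e s x = 0 -> s = x.
Proof.
move=> hd.
have hT : 0 < #|T| by apply/card_gt0P; exists s.
have hf : find (walk_len e s x) (iota 0 #|T|) < size (iota 0 #|T|).
  by rewrite size_iota -/(dist e s x) hd.
rewrite -has_find in hf.
have := nth_find 0 hf; rewrite -/(dist e s x) hd nth_iota //=.
case/existsP=> t /andP[hp /eqP hl].
by move: t hp hl => [[|//] ?] /= _ ->.
Qed.

Definition resb (T : finType) (e : rel T) (S : {set T}) :=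
  [forall x, forall y, e x y ==> [exists s in S, dist2 e s x != dist2 e s y]].

Lemma resbP (T : finType) (e : rel T) S : reflect (local_adj_resolving e S) (resb e S).
Proof.
apply: (iffP idP).
  move=> /forallP h x y xy; move/forallP: (h x) => /(_ y); rewrite xy /=.
  by case/existsP=> s /andP[sS hs]; exists s.
move=> h; apply/forallP=> x; apply/forallP=> y; apply/implyP=> xy.
by case: (h x y xy) => s sS hs; apply/existsP; exists s; rewrite sS.
Qed.

From Stdlib Require Import Classical.
Unset Implicit Arguments.

Theorem lemma1 (T : finType) (e : rel T) :
  simple_graph e ->
  connected_graph e ->
  ~ is_tree e ->
  in_class_G e ->
  exists g, girth_is e g /\ g <= 6.
Proof.
move=> g conn nt inG; have [sym irr] := g.
have [k hk] : exists k, has_cycle_len e k.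
  apply: NNPP => H; apply: nt; split => // k; apply/negP => hk; by apply: H; exists k.
have exP : exists k, has_cycle_len e k by exists k.
case: (ex_minnP exP) => m hm hmin.
exists m; split; first by split.
rewrite leqNgt; apply/negP => hm6.
have nc k' : 2 < k' -> k' < 7 -> ~~ has_cycle_len e k'.
  move=> _ k7; apply/negP => hk'.
  by have := leq_ltn_trans (hmin _ hk') k7; rewrite ltnNge hm6.
case/existsP: hm => t /andP[/andP[h2 hc] hu].
have hT : 1 < #|T|.
  have := max_card (mem t); rewrite (card_uniqP hu) size_tuple.
  by apply: leq_trans; apply: ltnW.
have rT : resb e setT.
  apply/resbP => x y xy; exists x; first by rewrite inE.
  rewrite /dist2 dist_refl; apply/eqP => /esym /eqP.
  rewrite eqn_leq /= => /andP[h _]; move: h; rewrite geq_min leqn0 /= orbF.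
  move=> /eqP /dist0 exy; by move: xy; rewrite exy irr.
case: (@arg_minnP _ setT (resb e) (fun S => #|S|) rT) => B hB hBmin.
have basis : local_adj_basis e B.
  split; first exact/resbP.
  by move=> S /resbP hS; apply: hBmin.
have [v hv] := inG B basis.
apply: (core (v := v) (t := t) g nc) => //; last by rewrite size_tuple.
move=> x y xy; case: (resbP _ _ hB x y xy) => s sB hs.
have vs : e v s by move: (subsetP hv s sB); rewrite inE.
case/or4P: (dist2_neq hT hs) => [/eqP <-|sx|/eqP <-|sy].
- by rewrite /near vs orbT.
- by apply/orP; left; rewrite /near; apply/or3P; apply: Or33; apply/existsP; exists s; rewrite vs.
- by rewrite /near vs !orbT.
- by apply/orP; right; rewrite /near; apply/or3P; apply: Or33; apply/existsP; exists s; rewrite vs.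
Qed.
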